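(* Let $\mathcal M=(E_{2n},\mathcal C)$ be a P-matroid, let $i\in[n]$, and let $\widehat{\mathcal M}$ be the lexicographic extension of $\mathcal M$ by $[-\cdot t_i]$. Let $O$ be the partial P-matroid USO defined by $\widehat{\mathcal M}$. Then: (a) for every $v$ with $v_i=1$ we have $O(v)_i=-$ and $O(v)_j=0$ for all $j\neq i$ (so the upper $i$-facet $\{v:v_i=1\}$ is a maximal unoriented subcube); (b) for every $w$ with $w_i=0$ we have $O(w)_i=+$ (so the upper $i$-facet is a hypersink, i.e., a hypervertex all of whose incident edges in dimension $i$ are incoming); (c) if $\mathcal M$ is uniform, then $O(w)_j\neq0$ for all $w$ with $w_i=0$ and all $j\in[n]$.
   Context: An oriented matroid $(E,\mathcal C)$ is given by circuits $X\in\{-,0,+\}^E$ with support $\underline X$; bases are inclusion-maximal subsets containing no circuit support; all bases have the same size (the rank); the oriented matroid is uniform if every subset of size equal to the rank is a basis. Cocircuits $\mathcal C^*$ are the circuits of the dual (inclusion-minimal nonzero signed sets orthogonal to all circuits). For a basis $B$, $e\notin B$: $C(B,e)$ is the unique circuit $X$ with $X_e=+$, $\underline X\subseteq B\cup\{e\}$; for $e\in B$: $C^*(B,e)$ is the unique cocircuit $D$ with $D_e=+$, $\underline D\cap(B\setminus\{e\})=\emptyset$. A localization for $\mathcal M$ is a function $\sigma:\mathcal C^*\to\{-,0,+\}$ specifying an extension $\widehat{\mathcal M}$ to $E\cup\{q\}$ such that for every cocircuit $Y$ of $\mathcal M$, $(Y,\sigma(Y))$ (sign $\sigma(Y)$ on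 $q$) is a cocircuit of $\widehat{\mathcal M}$. For $e\in E$ and $s\in\{-,0,+\}$, the function $\sigma(D)=s\cdot D_e$ if $D_e\neq0$, $\sigma(D)=0$ otherwise, is a localization; the extension it specifies is the lexicographic extension by $[s\cdot e]$. $S=\{s_1,\dots,s_n\}$, $T=\{t_1,\dots,t_n\}$, $E_{2n}=S\cup T$; a P-matroid is an oriented matroid on $E_{2n}$ in which $S$ is a basis and no circuit $X$ satisfies $X_{s_i}=-X_{t_i}$ for all $i$ with $\{s_i,t_i\}\subseteq\underline X$. For $v\in\{0,1\}^n$, $B(v)=\{s_j:v_j=0\}\cup\{t_j:v_j=1\}$. The partial P-matroid USO of $\widehat{\mathcal M}$ is $O:\{0,1\}^n\to\{-,0,+\}^n$ with, for $C=C(B(v),q)$ and $e=s_j$ if $v_j=0$, $e=t_j$ if $v_j=1$: $O(v)_j=+$ if $C_e=-$ (outgoing), $-$ if $C_e=+$ (incoming), $0$ if $C_e=0$ (unoriented). *)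

(* Defs.v *)
From mathcomp Require Import all_boot.
Set Implicit Arguments. Unset Strict Implicit. Unset Printing Implicit Defensive.

(* Signs {-,0,+} encoded as option bool: None = 0, Some true = +, Some false = -. *)
Definition sz : option bool := None.
Definition sp : option bool := Some true.
Definition sm : option bool := Some false.
Definition sneg (a : option bool) : option bool := omap negb a.
Definition smul (a b : option bool) : option bool :=
  match a, b with Some x, Some y => Some (x == y) | _, _ => None end.

Definition signed (T : finType) := {ffun T -> option bool}.

Section SignedSets.
Variable T : finType.
Implicit Types (X Y Z D : signed T) (C : {set signed T}).

Definition supp X : {set T} := [set e | X e != sz].
Definition posp X : {set T} := [set e | X e == sp].
Definition negp X : {set T} := [set e | X e == sm].
Definition opp X : signed T := [ffun e => sneg (X e)].

Definition is_OM C : Prop :=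
  [/\ (forall X, X \in C -> supp X != set0),
      (forall X, X \in C -> opp X \in C),
      (forall X Y, X \in C -> Y \in C -> supp X \subset supp Y -> X = Y \/ X = opp Y)
    & (forall X Y e, X \in C -> Y \in C -> X != opp Y ->
         e \in posp X -> e \in negp Y ->
         exists2 Z, Z \in C &
           (posp Z \subset (posp X :|: posp Y) :\ e) &&
           (negp Z \subset (negp X :|: negp Y) :\ e))].

Definition orthogonal X Y : bool :=
  [disjoint supp X & supp Y] ||
  ([exists e, smul (X e) (Y e) == sp] && [exists f, smul (X f) (Y f) == sm]).

Definition orth_all C D : bool := [forall X in C, orthogonal X D].

Definition cocircuits C : {set signed T} :=
  [set D | [&& supp D != set0, orth_all C D &
     [forall D' : signed T, (supp D' != set0) && orth_all C D' ==>
                             ~~ (supp D' \proper supp D)]]].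

Definition independent C (A : {set T}) : bool := [forall X in C, ~~ (supp X \subset A)].
Definition is_basis C (B : {set T}) : bool :=
  independent C B && [forall A : {set T}, (B \proper A) ==> ~~ independent C A].

Definition uniform C : Prop :=
  forall B A : {set T}, is_basis C B -> #|A| = #|B| -> is_basis C A.

End SignedSets.

(* Ground set E_{2n} = S u T: (false, j) = s_j, (true, j) = t_j. *)
Definition E2n (n : nat) : finType := (bool * 'I_n)%type.
Definition s_ {n} (j : 'I_n) : E2n n := (false, j).
Definition t_ {n} (j : 'I_n) : E2n n := (true, j).
Definition Sset (n : nat) : {set E2n n} := [set e : E2n n | ~~ e.1].

Definition P_matroid (n : nat) (C : {set signed (E2n n)}) : Prop :=
  [/\ is_OM C, is_basis C (Sset n) &
      ~ (exists2 X, X \in C &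
          forall j : 'I_n, X (s_ j) != sz -> X (t_ j) != sz ->
                           X (s_ j) = sneg (X (t_ j)))].

(* Extensions to E u {q}, with q = None. *)
Section Extension.
Variable E : finType.

Definition restr (X : signed (option E)) : signed E := [ffun e => X (Some e)].
Definition extq (Y : signed E) (a : option bool) : signed (option E) :=
  [ffun o => match o with None => a | Some e => Y e end].

Definition extension_by (C : {set signed E}) (sigma : signed E -> option bool)
    (Ch : {set signed (option E)}) : Prop :=
  [/\ is_OM Ch,
      C = [set restr X | X in Ch & X None == sz]
    & forall Y, Y \in cocircuits C -> extq Y (sigma Y) \in cocircuits Ch].

(* Lexicographic localization [s . e]: sigma(D) = s * D_e (0 if D_e = 0). *)
Definition lex_loc (s : option bool) (e : E) (D : signed E) : option bool :=
  smul s (D e).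

Definition lex_extension (C : {set signed E}) (s : option bool) (e : E)
    (Ch : {set signed (option E)}) : Prop :=
  extension_by C (lex_loc s e) Ch.

(* Fundamental circuit C(B, q): the (unique, when B is a basis) circuit X of Ch
   with X_q = + and support in B u {q}. *)
Definition fund_circ_q (Ch : {set signed (option E)}) (B : {set E}) :
    option (signed (option E)) :=
  [pick X in Ch | (X None == sp) &&
     [forall o : option E, (X o != sz) ==>
        (if o is Some e then e \in B else true)]].
End Extension.

(* B(v) = {s_j : v_j = 0} u {t_j : v_j = 1}, with 0 = false, 1 = true. *)
Definition Bv {n} (v : {ffun 'I_n -> bool}) : {set E2n n} := [set e : E2n n | e.1 == v e.2].

(* Partial P-matroid USO: O(v)_j = - C_e, where e = s_j or t_j is the element of B(v)
   with index j and C = C(B(v), q). *)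
Definition USO {n} (Ch : {set signed (option (E2n n))}) (v : {ffun 'I_n -> bool})
    (j : 'I_n) : option bool :=
  match fund_circ_q Ch (Bv v) with
  | Some X => sneg (X (Some ((v j, j) : E2n n)))
  | None => sz
  end.

(* Main.v *)
Require Import Defs.
From mathcomp Require Import all_boot.
Set Implicit Arguments. Unset Strict Implicit. Unset Printing Implicit Defensive.

Lemma snegK : involutive sneg. Proof. by case=> [[]|]. Qed.
Lemma inSupp {T : finType} (X : signed T) e : (e \in supp X) = (X e != sz). Proof. by rewrite inE. Qed.
Lemma oppE {T : finType} (X : signed T) e : opp X e = sneg (X e). Proof. by rewrite ffunE. Qed.
Lemma oppK {T : finType} (X : signed T) : opp (opp X) = X.
Proof. by apply/ffunP=> e; rewrite !oppE snegK. Qed.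
Lemma supp_opp {T : finType} (X : signed T) : supp (opp X) = supp X.
Proof. by apply/setP=> e; rewrite !inE oppE; case: (X e) => [[]|]. Qed.

Definition conf {T : finType} (Z X Y : signed T) :=
  forall j, Z j = sz \/ Z j = X j \/ Z j = Y j.

Lemma incl_pw {T : finType} (Z X Y : signed T) e :
  posp Z \subset (posp X :|: posp Y) :\ e ->
  negp Z \subset (negp X :|: negp Y) :\ e -> Z e = sz /\ conf Z X Y.
Proof.
move=> /subsetP Hp /subsetP Hn; split.
  case E: (Z e) => [[]|] //.
    by have := Hp e; rewrite !inE E eqxx /= => /(_ isT).
  by have := Hn e; rewrite !inE E eqxx /= => /(_ isT).
move=> j; case E: (Z j) => [[]|]; [| |by left].
  have := Hp j; rewrite !inE E eqxx /= => /(_ isT) /andP[_ /orP[] /eqP ->]; auto.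
have := Hn j; rewrite !inE E eqxx /= => /(_ isT) /andP[_ /orP[] /eqP ->]; auto.
Qed.

Lemma WE {T : finType} (C : {set signed T}) X Y e : is_OM C -> X \in C -> Y \in C ->
  X != opp Y -> X e != sz -> Y e = sneg (X e) ->
  exists2 Z, Z \in C & Z e = sz /\ conf Z X Y.
Proof.
case=> _ _ _ Hel HX HY Hxy.
case E: (X e) => [[]|] // _ /= EY.
  have [||Z HZ /andP[H1 H2]] := Hel X Y e HX HY Hxy; try by rewrite inE ?E ?EY.
  by exists Z => //; exact: (incl_pw H1 H2).
have Hyx : Y != opp X.
  by apply: contra Hxy => /eqP ->; rewrite oppK.
have [||Z HZ /andP[H1 H2]] := Hel Y X e HY HX Hyx; try by rewrite inE ?E ?EY.
exists Z => //; have [-> Hc] := incl_pw H1 H2; split=> // j.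
by case: (Hc j) => [|[]]; auto.
Qed.


Lemma card_lt {T : finType} (A B : {set T}) x :
  A \subset B -> x \in B -> x \notin A -> #|A| < #|B|.
Proof. move=> sAB xB xA; apply: proper_card; apply/properP; split=> //; by exists x. Qed.

Lemma conf_supp {T : finType} (Z X Y : signed T) :
  conf Z X Y -> supp Z \subset supp X :|: supp Y.
Proof.
move=> H; apply/subsetP=> j; rewrite !inE.
by case: (H j) => [->|[]->] // ->; rewrite ?orbT.
Qed.

Definition bad {T : finType} (X Y V : signed T) : {set T} :=
  [set j | ~~ [|| V j == sz, V j == X j | V j == Y j]].

Lemma SSE {T : finType} (C : {set signed T}) : is_OM C -> forall k X Y e f,
  X \in C -> Y \in C ->
  #|supp X :|: supp Y| <= k -> X e != sz -> Y e = sneg (X e) -> X f != sz -> Y f = sz ->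
  exists2 Z, Z \in C & [/\ Z e = sz, Z f != sz & conf Z X Y].
Proof.
move=> HOM; elim=> [|k IH] X Y e f HX HY Hk HXe HYe HXf HYf.
  have : e \in supp X :|: supp Y by rewrite !inE HXe.
  by move: Hk; rewrite leqn0 cards_eq0 => /eqP ->; rewrite inE.
have HXY : X != opp Y by apply/eqP => E; move: HXf; rewrite E oppE HYf.
have [Z3 HZ3 [HZ3e HZ3c]] := WE HOM HX HY HXY HXe HYe.
case: (boolP (Z3 f != sz)) => [HZ3f|]; first by exists Z3.
rewrite negbK => /eqP HZ3f.
have [g HZ3g HXg] : exists2 g, Z3 g != sz & X g = sz.
  case: (boolP [exists g, (Z3 g != sz) && (X g == sz)]) => [/existsP[g /andP[? /eqP ?]]|H].
    by exists g.
  exfalso; have Hs : supp Z3 \subset supp X.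
    move: H; rewrite negb_exists => /forallP H.
    by apply/subsetP => j; rewrite !inE => Hj; move: (H j); rewrite Hj.
  case: HOM => _ _ Hinc _; case: (Hinc _ _ HZ3 HX Hs) => E.
    by move: HZ3e HXe; rewrite E => ->.
  by move: HZ3e HXe; rewrite E oppE; case: (X e) => [[]|].
have HYg : Y g = Z3 g.
  case: (HZ3c g) => [E|[E|E]] //; by move: HZ3g; rewrite E ?HXg.
have HoZ3 : opp Z3 \in C by case: HOM => _ Hop _ _; exact: Hop.
have sZ3 := subsetP (conf_supp HZ3c).
have Hm1 : #|supp Y :|: supp (opp Z3)| <= k.
  rewrite -ltnS; apply: leq_trans Hk; apply: (card_lt (x:=f)).
  - rewrite supp_opp; apply/subsetP => j; rewrite inE => /orP[Hj|Hj].
      by rewrite inE Hj orbT.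
    exact: sZ3.
  - by rewrite !inE HXf.
  - by rewrite supp_opp !inE HYf HZ3f.
have [||||Y' HY' [HY'g HY'e HY'c]] := IH Y (opp Z3) g e HY HoZ3 Hm1.
- by rewrite HYg.
- by rewrite oppE HYg.
- by rewrite HYe; case: (X e) HXe => [[]|].
- by rewrite oppE HZ3e.
have HY'e2 : Y' e = Y e.
  case: (HY'c e) => [E|[E|E]] //; by move: HY'e; rewrite E ?oppE ?HZ3e.
have HY'f : Y' f = sz.
  by case: (HY'c f) => [E|[E|E]]; rewrite E ?oppE ?HYf ?HZ3f.
have sY' : forall j, Y' j != sz -> (X j != sz) || (Y j != sz).
  move=> j; case: (HY'c j) => [->|[->|->]] H.
  - by rewrite eqxx in H.
  - by rewrite H orbT.
  by have := sZ3 j; rewrite !inE; apply; move: H; rewrite oppE; case: (Z3 j).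
have Hm2 : #|supp X :|: supp Y'| <= k.
  rewrite -ltnS; apply: leq_trans Hk; apply: (card_lt (x:=g)).
  - apply/subsetP => j; rewrite !inE => /orP[->//|Hj]; exact: sY'.
  - by rewrite !inE HYg HZ3g orbT.
  - by rewrite !inE HXg HY'g.
have HY'e3 : Y' e = sneg (X e) by rewrite HY'e2.
have [W HW [HWe HWf HWc]] := IH X Y' e f HX HY' Hm2 HXe HY'e3 HXf HY'f.
have inner : forall m V, V \in C -> V e = sz -> V f != sz ->
    (forall j, V j = sz \/ V j = X j \/ V j = Y j \/ V j = sneg (Z3 j)) ->
    #|bad X Y V| <= m ->
    exists2 Z, Z \in C & [/\ Z e = sz, Z f != sz & conf Z X Y].
  elim=> [|m IHm] V HV HVe HVf HVc Hb;
   case: (set_0Vmem (bad X Y V)) => [E|[j Hj]].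
  - exists V => //; split=>// j'; have : j' \notin bad X Y V by rewrite E inE.
    by rewrite inE negbK => /or3P[] /eqP; auto.
  - by move: Hb; rewrite leqn0 cards_eq0 => /eqP E'; rewrite E' inE in Hj.
  - exists V => //; split=>// j'; have : j' \notin bad X Y V by rewrite E inE.
    by rewrite inE negbK => /or3P[] /eqP; auto.
  have HVj : V j = sneg (Z3 j).
    move: Hj; rewrite inE; case: (HVc j) => [->|[->|[->|->]]] //; by rewrite eqxx ?orbT.
  have HVj0 : V j != sz by move: Hj; rewrite inE; apply: contra => /eqP ->.
  have sV : forall j, V j != sz -> (X j != sz) || (Y j != sz).
    move=> j'; case: (HVc j') => [->|[->|[->|->]]] H.
    - by rewrite eqxx in H.
    - by rewrite H.
    - by rewrite H orbT.
    by have := sZ3 j'; rewrite !inE; apply; move: H; case: (Z3 j').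
  have Hm3 : #|supp V :|: supp Z3| <= k.
    rewrite -ltnS; apply: leq_trans Hk; apply: (card_lt (x:=e)).
    - apply/subsetP => j'; rewrite !inE => /orP[Hj'|Hj'].
        exact: sV.
      by have := sZ3 j'; rewrite !inE; apply.
    - by rewrite !inE HXe.
    - by rewrite !inE HVe HZ3e.
  have HZj : Z3 j = sneg (V j) by rewrite HVj snegK.
  have [V' HV' [HV'j HV'f HV'c]] := IH V Z3 j f HV HZ3 Hm3 HVj0 HZj HVf HZ3f.
  apply: (IHm V') => //.
  - by case: (HV'c e) => [->|[->|->]].
  - move=> j'; case: (HV'c j') => [->|[->|->]]; first by left.
      exact: HVc.
    by case: (HZ3c j') => [->|[->|->]]; auto.
  - rewrite -ltnS; apply: leq_trans Hb; apply: (card_lt (x:=j)) => //.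
      apply/subsetP => j'; rewrite !inE; case: (HV'c j') => [->|[->|->]].
      + by rewrite eqxx.
      + by [].
      + by case: (HZ3c j') => [->|[->|->]]; rewrite eqxx ?orbT.
    by rewrite inE HV'j eqxx.
apply: (inner #|bad X Y W| W) => // j.
case: (HWc j) => [->|[->|->]]; auto.
by case: (HY'c j) => [->|[->|->]]; auto; rewrite oppE; auto.
Qed.


Lemma dep_circ {T : finType} (C : {set signed T}) A :
  ~~ independent C A -> exists2 X, X \in C & supp X \subset A.
Proof.
rewrite /independent negb_forall_in => /existsP[X /andP[HX]].
by rewrite negbK; exists X.
Qed.

Lemma indep_circ {T : finType} (C : {set signed T}) A X :
  independent C A -> X \in C -> ~~ (supp X \subset A).
Proof. by move=> /forall_inP H /H. Qed.

Lemma opp_in {T : finType} (C : {set signed T}) X : is_OM C -> X \in C -> opp X \in C.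
Proof. by case=> _ H _ _; apply: H. Qed.

Lemma fund_exists {T : finType} (C : {set signed T}) B f :
  is_OM C -> is_basis C B -> f \notin B ->
  exists2 X, X \in C & X f = sp /\ supp X \subset f |: B.
Proof.
move=> HOM /andP[HI /forallP HM] Hf.
have Hp : B \proper f |: B.
  by apply/properP; split; [apply: subsetUr|exists f; rewrite ?setU11].
have [X HX HsX] := dep_circ (implyP (HM (f |: B)) Hp).
case E: (X f) => [[]|].
- by exists X.
- exists (opp X); first exact: opp_in.
  by rewrite oppE E supp_opp.
- exfalso; move: (indep_circ HI HX); apply/negP/negPn.
  apply/subsetP => j Hj; move: (subsetP HsX j Hj); rewrite !inE.
  case/orP=> // /eqP Ej; by move: Hj; rewrite Ej inE E.
Qed.

Lemma UE {T : finType} (C : {set signed T}) X Y e : is_OM C -> X \in C -> Y \in C ->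
  X e != sz -> Y e != sz -> supp X != supp Y ->
  exists2 Z, Z \in C & supp Z \subset (supp X :|: supp Y) :\ e.
Proof.
move=> HOM HX HY HXe HYe Hs.
have Hsub : forall Z W : signed T, Z e = sz -> conf Z X W -> supp W = supp Y ->
    supp Z \subset (supp X :|: supp Y) :\ e.
  move=> Z W HZe HZc HW; apply/subsetP => j Hj; rewrite !inE.
  have := subsetP (conf_supp HZc) j Hj; rewrite HW !inE => ->; rewrite andbT.
  by apply/eqP => Ej; move: Hj; rewrite Ej inE HZe.
case: (boolP (Y e == sneg (X e))) => [/eqP HYe'|HYe'].
  have HXY : X != opp Y by apply: contra Hs => /eqP ->; rewrite supp_opp.
  have [Z HZ [HZe HZc]] := WE HOM HX HY HXY HXe HYe'.
  by exists Z => //; apply: (Hsub _ Y).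
have HYe2 : opp Y e = sneg (X e).
  by rewrite oppE; move: HXe HYe HYe'; case: (X e) => [[]|]; case: (Y e) => [[]|].
have HXY : X != opp (opp Y) by rewrite oppK; apply: contra Hs => /eqP ->.
have [Z HZ [HZe HZc]] := WE HOM HX (opp_in HOM HY) HXY HXe HYe2.
by exists Z => //; apply: (Hsub _ (opp Y)); rewrite ?supp_opp.
Qed.

Lemma rank_le {T : finType} (C : {set signed T}) B J :
  is_OM C -> is_basis C B -> independent C J -> #|J| <= #|B|.
Proof.
move=> HOM HB; have /andP[HI /forallP HM] := HB.
suff H : forall k J, #|B :\: J| <= k -> independent C J -> #|J| <= #|B|.
  by apply: H.
elim=> [|k IH] {}J Hk HJ; rewrite leqNgt; apply/negP => Hgt.
  move: Hk; rewrite leqn0 cards_eq0 setD_eq0 => HBJ.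
  have := implyP (HM J); rewrite properEcard HBJ Hgt => /(_ isT); by rewrite HJ.
case: (boolP (B \subset J)) => HBJ.
  have := implyP (HM J); rewrite properEcard HBJ Hgt => /(_ isT); by rewrite HJ.
have [e He1 He2] : exists2 e, e \in B & e \notin J.
  by move/subsetPn: HBJ => [e ? ?]; exists e.
have Hdep : forall f, f \in J -> f \notin B ->
    exists2 X, X \in C & supp X \subset e |: (J :\ f).
  move=> f Hf1 Hf2; apply: dep_circ; apply/negP => Hind.
  have Hk' : #|B :\: (e |: (J :\ f))| <= k.
    rewrite -ltnS; apply: leq_trans Hk; apply: (card_lt (x:=e)).
    - apply/subsetP => x; rewrite !inE; case/andP => Hx HxB; rewrite HxB andbT.
      move: Hx; rewrite negb_or negb_and negbK => /andP[_ /orP[/eqP Exf|//]].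
      by move: Hf2; rewrite -Exf HxB.
    - by rewrite inE He1 He2.
    - by rewrite !inE eqxx.
  have := IH _ Hk' Hind; rewrite cardsU1 !inE (negbTE He2) andbF /= add1n.
  by rewrite (cardsD1 f J) Hf1 add1n in Hgt; rewrite leqNgt Hgt.
have [f0 Hf0J Hf0B] : exists2 f, f \in J & f \notin B.
  case: (boolP (J \subset B)) => [HJB|/subsetPn[f ? ?]]; last by exists f.
  by move: Hgt; rewrite ltnNge subset_leq_card.
have [X HX HXs] := Hdep f0 Hf0J Hf0B.
have HXe : X e != sz.
  apply/negP => /eqP HXe; move: (indep_circ HJ HX); apply/negP/negPn.
  apply/subsetP => x Hx; move: (subsetP HXs x Hx); rewrite !inE.
  case/orP => [/eqP Ex|/andP[_ //]]; by move: Hx; rewrite Ex inE HXe.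
have [g /and3P[Hg1 Hg2 Hg3]] : exists g, [&& g \in supp X, g \in J & g \notin B].
  case: (boolP [exists g, [&& g \in supp X, g \in J & g \notin B]]).
    by move/existsP.
  rewrite negb_exists => /forallP Hn; exfalso.
  move: (indep_circ HI HX); apply/negP/negPn; apply/subsetP => x Hx.
  move: (subsetP HXs x Hx) (Hn x); rewrite !inE -(inSupp X x) Hx /=.
  case/orP => [/eqP -> _ //|/andP[_ ->]] /=; by rewrite negbK.
have Hgf0 : g != f0.
  apply/eqP => Eg; move: (subsetP HXs g Hg1); rewrite Eg !inE eqxx /= orbF => /eqP E0.
  by move: He2; rewrite -E0 Hf0J.
have [X1 HX1 HX1s] := Hdep g Hg2 Hg3.
have HX1e : X1 e != sz.
  apply/negP => /eqP HXe1; move: (indep_circ HJ HX1); apply/negP/negPn.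
  apply/subsetP => x Hx; move: (subsetP HX1s x Hx); rewrite !inE.
  case/orP => [/eqP Ex|/andP[_ //]]; by move: Hx; rewrite Ex inE HXe1.
have Hne : supp X != supp X1.
  apply/negP => /eqP E; move: (subsetP HX1s g); rewrite -E Hg1 !inE eqxx /= orbF => /(_ isT) /eqP Eg.
  by move: He2; rewrite -Eg Hg2.
have [Z HZ HZs] := UE HOM HX HX1 HXe HX1e Hne.
move: (indep_circ HJ HZ); apply/negP/negPn; apply/subsetP => x Hx.
move: (subsetP HZs x Hx); rewrite !inE => /andP[Hxe /orP[H|H]].
  by move: (subsetP HXs x); rewrite !inE H (negbTE Hxe) /= => /(_ isT) /andP[].
by move: (subsetP HX1s x); rewrite !inE H (negbTE Hxe) /= => /(_ isT) /andP[].
Qed.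


Lemma smul_nz a b : a != sz -> b != sz -> smul a b != sz.
Proof. by case: a => [[]|]; case: b => [[]|]. Qed.
Lemma smul_z a b : smul a b != sz -> (a != sz) && (b != sz).
Proof. by case: a => [[]|]; case: b => [[]|]. Qed.
Lemma smulNl a b : smul (sneg a) b = sneg (smul a b).
Proof. by case: a => [[]|]; case: b => [[]|]. Qed.
Lemma smulNr a b : smul a (sneg b) = sneg (smul a b).
Proof. by case: a => [[]|]; case: b => [[]|]. Qed.
Lemma snegE a b : (sneg a == b) = (a == sneg b).
Proof. by case: a => [[]|]; case: b => [[]|]. Qed.

Lemma orth_prod {T : finType} (X D : signed T) g :
  orthogonal X D -> smul (X g) (D g) != sz ->
  (exists h, smul (X h) (D h) = sp) /\ (exists h, smul (X h) (D h) = sm).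
Proof.
move=> Ho Hg; case/orP: Ho => [|/andP[/existsP[h /eqP Hh] /existsP[h' /eqP Hh']]].
  rewrite disjoint_subset => /subsetP Hd.
  by case/andP: (smul_z Hg) => H1 H2; have := Hd g; rewrite !inE H1 H2 => /(_ isT).
by split; [exists h|exists h'].
Qed.

Lemma orth_of_prod {T : finType} (X D : signed T) :
  (forall g, smul (X g) (D g) != sz ->
     (exists h, smul (X h) (D h) = sp) /\ (exists h, smul (X h) (D h) = sm)) ->
  orthogonal X D.
Proof.
move=> H; case: (boolP [exists g, smul (X g) (D g) != sz]) => [/existsP[g Hg]|Hno].
  have [[h Hh] [h' Hh']] := H g Hg.
  by apply/orP; right; apply/andP; split; apply/existsP; [exists h|exists h']; apply/eqP.
apply/orP; left; rewrite disjoint_subset; apply/subsetP => x; rewrite !inE => H1; apply/negP => H2.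
by move: Hno; rewrite negb_exists => /forallP /(_ x); rewrite smul_nz.
Qed.

Lemma orth_opp {T : finType} (X D : signed T) : orthogonal X (opp D) = orthogonal X D.
Proof.
rewrite /orthogonal supp_opp andbC; congr (_ || (_ && _)); apply: eq_existsb => g;
by rewrite oppE smulNr snegE.
Qed.

Lemma orth_all_opp {T : finType} (C : {set signed T}) D :
  orth_all C (opp D) = orth_all C D.
Proof. by apply: eq_forallb => X; rewrite orth_opp. Qed.

Lemma cocirc_opp {T : finType} (C : {set signed T}) Y :
  Y \in cocircuits C -> opp Y \in cocircuits C.
Proof. by rewrite !inE supp_opp orth_all_opp. Qed.

Lemma cocirc_orth {T : finType} (C : {set signed T}) Y X :
  Y \in cocircuits C -> X \in C -> orthogonal X Y.
Proof. by rewrite inE => /and3P[_ /forall_inP H _] /H. Qed.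

Lemma zero_of_orth {T : finType} (C : {set signed T}) B D :
  is_OM C -> is_basis C B -> orth_all C D -> (forall b, b \in B -> D b = sz) ->
  forall g, D g = sz.
Proof.
move=> HOM HB /forall_inP HD HDB g; apply/eqP; apply/negP => /negP Hg.
have HgB : g \notin B by apply: contra Hg => /HDB ->.
have [X HX [HXg HXs]] := fund_exists HOM HB HgB.
have Hp : smul (X g) (D g) != sz by apply: smul_nz; rewrite // HXg.
have Hloc : forall h, smul (X h) (D h) != sz -> h = g.
  move=> h /smul_z /andP[H1 H2]; have := subsetP HXs h; rewrite !inE H1 => /(_ isT).
  by case/orP => [/eqP //|/HDB Hb]; move: H2; rewrite Hb.
have [[h Hh] [h' Hh']] := orth_prod (HD X HX) Hp.
have E1 := Hloc h; have E2 := Hloc h'; rewrite Hh Hh' in E1 E2.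
by move: Hh'; rewrite (E2 isT) -(E1 isT) Hh.
Qed.


Lemma smula0 a : smul a sz = sz. Proof. by case: a => [[]|]. Qed.
Lemma smulap a : smul a sp = a. Proof. by case: a => [[]|]. Qed.

Lemma dual_exists {T : finType} (C : {set signed T}) B e :
  is_OM C -> is_basis C B -> e \in B ->
  exists D : signed T, [/\ D e = sp, (forall b, b \in B -> b != e -> D b = sz) & orth_all C D].
Proof.
move=> HOM HB HeB; have /andP[HI _] := HB.
have HF : forall f : T, exists X : signed T,
    f \notin B -> [/\ X \in C, X f = sp & supp X \subset f |: B].
  move=> f; case: (boolP (f \in B)) => Hf.
    by exists [ffun _ => sz].
  by have [X HX [H1 H2]] := fund_exists HOM HB Hf; exists X.
have [F HFs] := fin_all_exists HF.
pose D : signed T := [ffun g => if g == e then sp else if g \in B then sz else sneg (F g e)].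
have De : D e = sp by rewrite ffunE eqxx.
have DB : forall b, b \in B -> b != e -> D b = sz.
  by move=> b Hb Hbe; rewrite ffunE (negbTE Hbe) Hb.
have Dout : forall g, g \notin B -> D g = sneg (F g e).
  move=> g Hg; rewrite ffunE (negbTE Hg); case: eqP => // Eg.
  by move: Hg; rewrite Eg HeB.
pose W (X : signed T) f := if X f == sp then opp (F f) else F f.
have Wprops : forall (X : signed T) f, f \notin B -> X f != sz ->
   [/\ W X f \in C, W X f f = sneg (X f),
       (forall j, W X f j != sz -> j = f \/ j \in B),
       (smul (X f) (D f) != sm -> W X f e != sm) &
       ((smul (X f) (D f) = sp -> W X f e = sp) /\
        (smul (X f) (D f) = sz -> W X f e = sz))].
  move=> X f Hf HXf; have [HFC HFf HFs'] := HFs f Hf.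
  have Hsp : forall j, F f j != sz -> j = f \/ j \in B.
    move=> j Hj; have := subsetP HFs' j; rewrite !inE Hj => /(_ isT).
    by case/orP => [/eqP|]; auto.
  rewrite /W Dout //; case E: (X f) HXf => [[]|] //= _.
    split.
    - exact: opp_in.
    - by rewrite oppE; exact: (congr1 sneg HFf).
    - by move=> j; rewrite oppE => Hj; apply: Hsp; move: Hj; case: (F f j).
    - by rewrite oppE; case: (F f e) => [[]|].
    - by rewrite oppE; case: (F f e) => [[]|].
  split => //; by case: (F f e) => [[]|].
have key : forall m (X : signed T), X \in C -> #|supp X :\: B| <= m ->
    (forall g, smul (X g) (D g) != sm) -> forall g, smul (X g) (D g) = sz.
  elim=> [|m IH] X HX Hm Hnn g0; apply/eqP; apply/negP => /negP Hg0.
  - have := indep_circ HI HX; move/subsetPn => [f Hf1 Hf2].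
    move: Hm; rewrite leqn0 cards_eq0 => /eqP E.
    have : f \in supp X :\: B by rewrite inE Hf1 Hf2.
    by rewrite E inE.
  have Hg0p : smul (X g0) (D g0) = sp by move: (Hnn g0) Hg0; case: smul => [[]|].
  have step : forall f g, X f != sz -> f \notin B -> g != f ->
      smul (X g) (D g) = sp -> W X f g = sz -> False.
    move=> f g HXf HfB Hgf Hgp HWg.
    have [HWC HWf HWs HWe _] := Wprops X f HfB HXf.
    have HXg : X g != sz.
      have H : smul (X g) (D g) != sz by rewrite Hgp.
      by case/andP: (smul_z H).
    have [Z HZ [HZf HZg HZc]] :=
      SSE HOM HX HWC (leqnn _) HXf HWf HXg HWg.
    have Hm' : #|supp Z :\: B| <= m.
      rewrite -ltnS; apply: leq_trans Hm; apply: (card_lt (x:=f)).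
      - apply/subsetP => j; rewrite !inE => /andP[HjB HZj]; rewrite HjB /=.
        case: (HZc j) => [Ej|[Ej|Ej]]; rewrite Ej in HZj => //.
        case: (HWs j HZj) => [Ejf|HjB']; last by rewrite HjB' in HjB.
        by move: HZj; rewrite -Ej Ejf HZf.
      - by rewrite !inE HfB HXf.
      - by rewrite !inE HZf eqxx andbF.
    have Hnn' : forall j, smul (Z j) (D j) != sm.
      move=> j; case: (HZc j) => [->|[->|Ej]] //.
      case: (boolP (W X f j == sz)) => [/eqP E0|HWj]; first by rewrite Ej E0.
      case: (HWs j HWj) => [Ejf|HjB].
        by move: HZf; rewrite -Ejf Ej => ->.
      case: (eqVneq j e) => [Eje|Hje].
        by rewrite Ej Eje De smulap; apply: HWe.
      by rewrite DB // smula0.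
    have := IH Z HZ Hm' Hnn' g.
    case: (HZc g) => [E0|[->|E0]]; first by move: HZg; rewrite E0.
      by rewrite Hgp.
    by move: HZg; rewrite E0 HWg.
  case: (boolP [exists g, (g \notin B) && (smul (X g) (D g) == sp)]).
    move/existsP=> [g1 /andP[Hg1B /eqP Hg1]].
    have HXg1 : X g1 != sz.
      have H : smul (X g1) (D g1) != sz by rewrite Hg1.
      by case/andP: (smul_z H).
    case: (boolP [exists f, [&& X f != sz, f \notin B & f != g1]]).
      move/existsP=> [f /and3P[HXf HfB Hfg]].
      have [_ _ HWs _ _] := Wprops X f HfB HXf.
      apply: (step f g1 HXf HfB _ Hg1); first by rewrite eq_sym.
      case: (boolP (W X f g1 == sz)) => [/eqP //|/HWs[E0|H0]]; last by rewrite H0 in Hg1B.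
      by rewrite E0 eqxx in Hfg.
    rewrite negb_exists => /forallP Honly.
    have HXs : forall j, X j != sz -> j = g1 \/ j \in B.
      move=> j Hj; move: (Honly j); rewrite Hj /= negb_and !negbK.
      by case/orP => [|/eqP]; auto.
    have [HWC HWf HWs _ [HWe1 _]] := Wprops X g1 Hg1B HXg1.
    case: (boolP (X == opp (W X g1))) => [/eqP EX|HXW].
      have := Hnn e; rewrite De smulap EX oppE HWe1 //.
    have [Z HZ [HZg HZc]] := WE HOM HX HWC HXW HXg1 HWf.
    move: (indep_circ HI HZ); apply/negP/negPn; apply/subsetP => j.
    rewrite inE => HZj; case: (HZc j) => [Ej|[Ej|Ej]]; rewrite Ej in HZj.
    - by rewrite eqxx in HZj.
    - case: (HXs j HZj) => // Ejg; by move: HZj; rewrite -Ej Ejg HZg eqxx.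
    - case: (HWs j HZj) => // Ejg; by move: HZj; rewrite -Ej Ejg HZg eqxx.
  rewrite negb_exists => /forallP Hnone.
  have Hg0B : g0 \in B.
    by move: (Hnone g0); rewrite Hg0p eqxx andbT negbK.
  have Hg0e : g0 = e.
    case: (eqVneq g0 e) => // Hne; exfalso; move: Hg0; rewrite DB // smula0 eqxx //.
  have := indep_circ HI HX; move/subsetPn => [f Hf1 Hf2].
  rewrite inE in Hf1.
  have [_ _ _ _ [_ HWe0]] := Wprops X f Hf2 Hf1.
  apply: (step f g0 Hf1 Hf2 _ Hg0p).
    by apply/eqP => E0; move: Hf2; rewrite -E0 Hg0B.
  rewrite Hg0e HWe0 //.
  move: (Hnone f) (Hnn f); rewrite Hf2 /=; case: smul => [[]|] //.
exists D; split => //; apply/forall_inP => X HX; apply: orth_of_prod => g Hg.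
split.
  case: (boolP [exists h, smul (X h) (D h) == sp]) => [/existsP[h /eqP]|]; first by exists h.
  rewrite negb_exists => /forallP Hn; exfalso.
  have Hn' : forall g, smul (opp X g) (D g) != sm.
    by move=> j; rewrite oppE smulNl snegE; apply: Hn.
  have := key _ (opp X) (opp_in HOM HX) (leqnn _) Hn' g.
  by rewrite oppE smulNl; move: Hg; case: smul => [[]|].
case: (boolP [exists h, smul (X h) (D h) == sm]) => [/existsP[h /eqP]|]; first by exists h.
rewrite negb_exists => /forallP Hn; exfalso.
by move: Hg; rewrite (key _ X HX (leqnn _) Hn g).
Qed.


Lemma cocirc_exists {T : finType} (C : {set signed T}) B e :
  is_OM C -> is_basis C B -> e \in B ->
  exists2 Y, Y \in cocircuits C & Y e = sp /\ (forall b, b \in B -> b != e -> Y b = sz).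
Proof.
move=> HOM HB HeB.
have [D [De DB HD]] := dual_exists HOM HB HeB.
pose P := fun D' : signed T => [&& supp D' != set0, orth_all C D' & supp D' \subset supp D].
have HP : P D.
  rewrite /P HD subxx !andbT; apply/set0Pn; exists e; by rewrite inE De.
case: (@arg_minnP _ D P (fun D' => #|supp D'|) HP) => Y /and3P[HY1 HY2 HY3] Hmin.
have HYc : Y \in cocircuits C.
  rewrite inE HY1 HY2 /=; apply/forallP => D'; apply/implyP => /andP[H1 H2].
  apply/negP => Hpr.
  have HPD : P D'.
    by rewrite /P H1 H2 /=; apply: subset_trans HY3; apply: proper_sub.
  by have := Hmin D' HPD; rewrite leqNgt (proper_card Hpr).
have HYB : forall b, b \in B -> b != e -> Y b = sz.
  move=> b Hb Hbe; apply/eqP; apply/negP => /negP Hyb.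
  have := subsetP HY3 b; rewrite !inE Hyb DB // => /(_ isT).
  by rewrite eqxx.
have HYe : Y e != sz.
  apply/negP => /eqP HYe.
  have Hz := zero_of_orth HOM HB HY2.
  move: HY1; rewrite (_ : supp Y = set0) ?eqxx //.
  apply/setP => x; rewrite !inE Hz ?eqxx // => b Hb.
  by case: (eqVneq b e) => [->//|]; apply: HYB.
case E: (Y e) HYe => [[]|] // _.
  by exists Y.
exists (opp Y); first exact: cocirc_opp.
by rewrite oppE E; split=> // b Hb Hbe; rewrite oppE HYB.
Qed.


Lemma Bv_in {n} (v : {ffun 'I_n -> bool}) (e : E2n n) : (e \in Bv v) = (e.1 == v e.2).
Proof. by rewrite inE. Qed.

Lemma card_Bv {n} (v : {ffun 'I_n -> bool}) : #|Bv v| = n.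
Proof.
rewrite (_ : Bv v = (fun j => ((v j, j) : E2n n)) @: [set: 'I_n]).
  by rewrite card_imset ?cardsT ?card_ord // => j1 j2 [_ ->].
apply/setP => -[b j]; rewrite inE /=; apply/eqP/imsetP => [->|[j' _ [-> ->]]] //.
by exists j; rewrite ?inE.
Qed.

Lemma Sset_Bv n : Sset n = Bv [ffun _ : 'I_n => false].
Proof. by apply/setP => -[b j]; rewrite !inE ffunE /=; case: b. Qed.

Lemma indep_Bv n (C : {set signed (E2n n)}) v : P_matroid C -> independent C (Bv v).
Proof.
case=> _ _ HP; apply/forall_inP => X HX; apply/negP => Hs; apply: HP; exists X => // j Hs1 Ht1.
have := subsetP Hs (s_ j); rewrite inE Hs1 => /(_ isT).
have := subsetP Hs (t_ j); rewrite inE Ht1 => /(_ isT).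
by rewrite !Bv_in /= => /eqP <-.
Qed.

Lemma basis_Bv n (C : {set signed (E2n n)}) v : P_matroid C -> is_basis C (Bv v).
Proof.
move=> HP; have [HOM HS _] := HP.
rewrite /is_basis indep_Bv //=; apply/forallP => A; apply/implyP => Hpr; apply/negP => HA.
have H1 := proper_card Hpr; have H2 := rank_le HOM HS HA.
rewrite Sset_Bv card_Bv in H2; rewrite card_Bv in H1.
by move: (leq_trans H1 H2); rewrite ltnn.
Qed.

Lemma inLB n (v : {ffun 'I_n -> bool}) (e : E2n n) :
  (Some e \in None |: (Some @: Bv v)) = (e \in Bv v).
Proof. rewrite in_setU1 /= mem_imset //; by move=> x y []. Qed.

Lemma extqE {E : finType} (Y : signed E) a o :
  extq Y a o = match o with None => a | Some e => Y e end.
Proof. by rewrite ffunE. Qed.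

Lemma fund_q n (C : {set signed (E2n n)}) Ch (i : 'I_n) v :
  P_matroid C -> lex_extension C sm (t_ i) Ch ->
  exists X, [/\ fund_circ_q Ch (Bv v) = Some X, X \in Ch, X None = sp &
                forall e, X (Some e) != sz -> e \in Bv v].
Proof.
move=> HP [HOMh Hdel Hcoc]; have [HOM HS HPn] := HP.
have HBv := basis_Bv v HP.
have lift : forall Xc, Xc \in C ->
    exists2 Xh, Xh \in Ch & Xh None = sz /\ forall e, Xh (Some e) = Xc e.
  move=> Xc; rewrite Hdel => /imsetP[Xh]; rewrite inE => /andP[HXh /eqP HN] ->.
  by exists Xh => //; split => // e; rewrite ffunE.
have down : forall Xh, Xh \in Ch -> Xh None = sz -> restr Xh \in C.
  move=> Xh H1 H2; rewrite Hdel; apply/imsetP; exists Xh => //.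
  by rewrite inE H1 H2 eqxx.
set LB := None |: (Some @: Bv v).
have Hdep : ~~ independent Ch LB.
  apply/negP => Hind.
  have HbLB : is_basis Ch LB.
    rewrite /is_basis Hind /=; apply/forallP => A; apply/implyP => /properP[HsA [o HoA HoLB]].
    case: o HoA HoLB => [f|] HoA HoLB; last by rewrite !inE eqxx in HoLB.
    have HfB : f \notin Bv v by rewrite -inLB.
    have [Xc HXc [HXf HXs]] := fund_exists HOM HBv HfB.
    have [Xh HXh [HXN HXS]] := lift Xc HXc.
    apply/negP => HA; move: (indep_circ HA HXh); apply/negP/negPn; apply/subsetP => o.
    rewrite inE; case: o => [g|]; last by rewrite HXN eqxx.
    rewrite HXS => Hg; have := subsetP HXs g; rewrite !inE Hg => /(_ isT) /orP[/eqP->//|Hgb].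
    by apply: (subsetP HsA); rewrite /LB inLB Bv_in.
  have [D [DN DB HD]] := dual_exists HOMh HbLB (setU11 _ _).
  have DS : forall f, D (Some f) = sz.
    move=> f; case: (boolP (f \in Bv v)) => Hf.
      by apply: DB; rewrite ?/LB ?inLB.
    have [Xc HXc [HXf HXs]] := fund_exists HOM HBv Hf.
    have [Xh HXh [HXN HXS]] := lift Xc HXc.
    case: (eqVneq (D (Some f)) sz) => // HDf; exfalso.
    have Hp : smul (Xh (Some f)) (D (Some f)) != sz by apply: smul_nz => //; rewrite HXS HXf.
    have Hloc : forall h, smul (Xh h) (D h) != sz -> h = Some f.
      case=> [g|] /smul_z /andP[H1 H2]; last by rewrite HXN eqxx in H1.
      move: H1; rewrite HXS => H1; have := subsetP HXs g.
      rewrite !inE H1 => /(_ isT) /orP[/eqP -> //|Hg].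
      have Hgin : Some g \in LB by rewrite /LB inLB Bv_in.
      by move: H2; rewrite (DB _ Hgin) ?eqxx.
    have [[h Hh] [h' Hh']] := orth_prod (forall_inP HD Xh HXh) Hp.
    have E1 := Hloc h; have E2 := Hloc h'; rewrite Hh Hh' in E1 E2.
    by move: Hh'; rewrite (E2 isT) -(E1 isT) Hh.
  pose v1 : {ffun 'I_n -> bool} := [ffun _ => true].
  have Hti : t_ i \in Bv v1 by rewrite inE ffunE.
  have [Y HY [HYt _]] := cocirc_exists HOM (basis_Bv v1 HP) Hti.
  have := Hcoc Y HY; rewrite inE => /and3P[_ _ /forallP /(_ D)].
  rewrite HD andbT => /implyP Himp.
  have H1 : supp D != set0 by apply/set0Pn; exists None; rewrite inE DN.
  move: (Himp H1) => /negP; apply.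
  apply/properP; split.
    apply/subsetP => o; rewrite !inE; case: o => [g|]; first by rewrite DS eqxx.
    by rewrite ffunE /lex_loc HYt.
  by exists (Some (t_ i)); rewrite !inE ?ffunE ?HYt ?DS.
have [X HX HXs] := dep_circ Hdep.
have HXS : forall e, X (Some e) != sz -> e \in Bv v.
  by move=> e He; rewrite -inLB; apply: (subsetP HXs); rewrite inE.
have HXN : X None != sz.
  apply/negP => /eqP HN; move: (indep_circ (indep_Bv v HP) (down X HX HN)).
  apply/negP/negPn; apply/subsetP => e; rewrite inE ffunE; exact: HXS.
pose X' := if X None == sp then X else opp X.
have HX'C : X' \in Ch by rewrite /X'; case: ifP => _; [|apply: opp_in].
have HX'N : X' None = sp.
  by rewrite /X'; case E: (X None) HXN => [[]|] //= _; rewrite ffunE E.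
have HX'S : forall e, X' (Some e) != sz -> e \in Bv v.
  rewrite /X'; case: ifP => _ // e; rewrite ffunE => He; apply: HXS.
  by move: He; case: (X (Some e)).
have Hall : [forall o, (X' o != sz) ==> (if o is Some e then e \in Bv v else true)].
  apply/forallP => -[e|]; rewrite ?implybT //; apply/implyP; exact: HX'S.
rewrite /fund_circ_q; case: pickP => [Z /andP[HZ /andP[/eqP HZN /forallP HZs]]|Hn].
  exists Z; split => // e He; exact: (implyP (HZs (Some e)) He).
by move: (Hn X'); rewrite HX'C HX'N eqxx Hall.
Qed.


Lemma orth_two {T : finType} (X D : signed T) a b : orthogonal X D ->
  (forall h, smul (X h) (D h) != sz -> h = a \/ h = b) ->
  smul (X a) (D a) != sz -> smul (X b) (D b) = sneg (smul (X a) (D a)).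
Proof.
move=> Ho Hloc Ha; have [[h Hh] [h' Hh']] := orth_prod Ho Ha.
have H1 := Hloc h; have H2 := Hloc h'; rewrite Hh Hh' in H1 H2.
case: (H1 isT) => E1; case: (H2 isT) => E2; subst h h'.
- by move: Hh'; rewrite Hh.
- by rewrite Hh Hh'.
- by rewrite Hh Hh'.
- by move: Hh'; rewrite Hh.
Qed.

Lemma orth_one {T : finType} (X D : signed T) a : orthogonal X D ->
  (forall h, smul (X h) (D h) != sz -> h = a) -> smul (X a) (D a) = sz.
Proof.
move=> Ho Hloc; case: (eqVneq (smul (X a) (D a)) sz) => // Ha.
have := orth_two Ho (b:=a) (fun h H => or_introl (Hloc h H)) Ha.
by move: Ha; case: smul => [[]|].
Qed.

Theorem mainTheorem7 (n : nat) (C : {set signed (E2n n)})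
    (Ch : {set signed (option (E2n n))}) (i : 'I_n) :
  P_matroid C ->
  lex_extension C sm (t_ i) Ch ->
  [/\ (forall v : {ffun 'I_n -> bool}, v i ->
         USO Ch v i = sm /\ (forall j : 'I_n, j != i -> USO Ch v j = sz)),
      (forall w : {ffun 'I_n -> bool}, ~~ w i -> USO Ch w i = sp)
    & (uniform C -> forall w : {ffun 'I_n -> bool}, ~~ w i ->
         forall j : 'I_n, USO Ch w j != sz)].
Proof.
move=> HP HL; have [HOM HS HPn] := HP; have [HOMh Hdel Hcoc] := HL.
have coc : forall Y, Y \in cocircuits C -> forall X, X \in Ch ->
    orthogonal X (extq Y (smul sm (Y (t_ i)))).
  by move=> Y HY X HX; apply: (cocirc_orth (Hcoc Y HY) HX).
have locX : forall v (X : signed (option (E2n n))) (Y : signed (E2n n)) e s,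
    (forall g, X (Some g) != sz -> g \in Bv v) ->
    (forall b, b \in Bv v -> b != e -> Y b = sz) ->
    forall h, smul (X h) (extq Y s h) != sz -> h = None \/ h = Some e.
  move=> v X Y e s HXS HYB [g|] Hh; [right|by left].
  move: Hh; rewrite ffunE /= => /smul_z /andP[H1 H2].
  have Hg := HXS g H1; case: (eqVneq g e) => [->//|Hne].
  by rewrite HYB in H2.
have NoneP : forall (X : signed (option (E2n n))) (Y : signed (E2n n)) s,
    smul (X None) (extq Y s None) = smul (X None) s.
  by move=> X Y s; rewrite ffunE.
have SomeP : forall (X : signed (option (E2n n))) (Y : signed (E2n n)) s g,
    smul (X (Some g)) (extq Y s (Some g)) = smul (X (Some g)) (Y g).
  by move=> X Y s g; rewrite ffunE.
have locZ : forall w (Z : signed (E2n n)) (Y : signed (E2n n)) e,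
    supp Z \subset t_ i |: Bv w ->
    (forall b, b \in Bv w -> b != e -> Y b = sz) ->
    forall h, smul (Z h) (Y h) != sz -> h = e \/ h = t_ i.
  move=> w Z Y e HZs HYB h /smul_z /andP[H1 H2].
  have := subsetP HZs h; rewrite inE H1 => /(_ isT); rewrite in_setU1.
  case/orP => [/eqP->|Hh]; [by right|left].
  by case: (eqVneq h e) => // Hne; rewrite HYB in H2.
have partb : forall w : {ffun 'I_n -> bool}, ~~ w i -> USO Ch w i = sp.
  move=> w Hwi; have [X [Hpick HX HXN HXS]] := fund_q w HP HL.
  have Hs : s_ i \in Bv w by rewrite inE /= (negbTE Hwi).
  have Ht : t_ i \notin Bv w by rewrite inE /= (negbTE Hwi).
  have HBw := basis_Bv w HP.
  have [Z HZ [HZt HZs]] := fund_exists HOM HBw Ht.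
  have HZsi : Z (s_ i) = sp.
    case E: (Z (s_ i)) => [[]|] //; exfalso; apply: HPn; exists Z => // j H1 H2;
     (case: (eqVneq j i) => [Eji|Hji]; [subst j|]).
    - by rewrite E HZt.
    - have := subsetP HZs (s_ j); rewrite inE H1 => /(_ isT).
      have := subsetP HZs (t_ j); rewrite inE H2 => /(_ isT).
      by rewrite !inE /= !xpair_eqE /= (negbTE Hji) /= => /eqP <-.
    - by rewrite E in H1.
    - have := subsetP HZs (s_ j); rewrite inE H1 => /(_ isT).
      have := subsetP HZs (t_ j); rewrite inE H2 => /(_ isT).
      by rewrite !inE /= !xpair_eqE /= (negbTE Hji) /= => /eqP <-.
  have [Y HY [HYs HYB]] := cocirc_exists HOM HBw Hs.
  have HYt : Y (t_ i) = sm.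
    have Ho := cocirc_orth HY HZ.
    have := orth_two Ho (locZ w Z Y (s_ i) HZs HYB).
    rewrite HZsi HYs HZt => /(_ isT).
    by case: (Y (t_ i)) => [[]|].
  have Ho := coc Y HY X HX.
  have := orth_two Ho (locX w X Y (s_ i) _ HXS HYB).
  rewrite NoneP SomeP HXN HYt HYs /= => /(_ isT).
  rewrite /USO Hpick (negbTE Hwi).
  by case: (X (Some (s_ i))) => [[]|].
split => //.
- move=> v Hvi; have [X [Hpick HX HXN HXS]] := fund_q v HP HL.
  have HtB : t_ i \in Bv v by rewrite inE /= Hvi.
  have HBv := basis_Bv v HP.
  have Hzero : forall e, e \in Bv v -> e != t_ i -> X (Some e) = sz.
    move=> e He Hne; have [Y HY [HYe HYB]] := cocirc_exists HOM HBv He.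
    have HYt : Y (t_ i) = sz by apply: HYB; rewrite // eq_sym.
    have Ho := coc Y HY X HX.
    have Hloc : forall h, smul (X h) (extq Y (smul sm (Y (t_ i))) h) != sz -> h = Some e.
      move=> h Hh; case: (locX v X Y e _ HXS HYB h Hh) => // Eh.
      by move: Hh; rewrite Eh NoneP HYt /= smula0 eqxx.
    by have := orth_one Ho Hloc; rewrite SomeP HYe smulap.
  have [Y' HY' [HY't HY'B]] := cocirc_exists HOM HBv HtB.
  have HXt : X (Some (t_ i)) = sp.
    have Ho := coc Y' HY' X HX.
    have := orth_two Ho (locX v X Y' (t_ i) _ HXS HY'B).
    rewrite NoneP SomeP HXN HY't /= => /(_ isT).
    by rewrite smulap.
  split.
    by rewrite /USO Hpick Hvi HXt.
  move=> j Hji; rewrite /USO Hpick.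
  have Hj1 : ((v j, j) : E2n n) \in Bv v by rewrite inE /=.
  have Hj2 : ((v j, j) : E2n n) != t_ i.
    by apply/eqP => -[_ E]; move: Hji; rewrite E eqxx.
  by rewrite (Hzero _ Hj1 Hj2).
- move=> Hunif w Hwi j; case: (eqVneq j i) => [->|Hji]; first by rewrite partb.
  have [X [Hpick HX HXN HXS]] := fund_q w HP HL.
  have He : ((w j, j) : E2n n) \in Bv w by rewrite inE /=.
  have Het : ((w j, j) : E2n n) != t_ i.
    by apply/eqP => -[_ E]; move: Hji; rewrite E eqxx.
  have Ht : t_ i \notin Bv w by rewrite inE /= (negbTE Hwi).
  have HBw := basis_Bv w HP.
  have [Z HZ [HZt HZs]] := fund_exists HOM HBw Ht.
  set e : E2n n := (w j, j) in He Het *.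
  have HZe : Z e != sz.
    apply/negP => /eqP HZe0.
    pose A := t_ i |: (Bv w :\ e).
    have HA : #|A| = #|Sset n|.
      rewrite Sset_Bv card_Bv /A cardsU1 in_setD1 (negbTE Ht) andbF /= add1n.
      by have := cardsD1 e (Bv w); rewrite He card_Bv add1n => E; exact: esym E.
    have /andP[HIA _] := Hunif _ _ HS HA.
    move: (indep_circ HIA HZ); apply/negP/negPn; apply/subsetP => x Hx.
    have := subsetP HZs x Hx; rewrite /A !in_setU1 in_setD1.
    case/orP => [->//|Hxb]; rewrite Hxb andbT; apply/orP; right.
    by apply/eqP => Exe; move: Hx; rewrite inE Exe HZe0 eqxx.
  have [Y HY [HYe HYB]] := cocirc_exists HOM HBw He.
  have HYt : Y (t_ i) != sz.
    apply/negP => /eqP HYt0.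
    have Ho := cocirc_orth HY HZ.
    have Hloc : forall h, smul (Z h) (Y h) != sz -> h = e.
      move=> h Hh; case: (locZ w Z Y e HZs HYB h Hh) => // Eh.
      by move: Hh; rewrite Eh HYt0 smula0 eqxx.
    by have := orth_one Ho Hloc; rewrite HYe smulap => H; rewrite H eqxx in HZe.
  have Ho := coc Y HY X HX.
  have HXe : X (Some e) != sz.
    apply/negP => /eqP HXe0.
    have Hloc : forall h, smul (X h) (extq Y (smul sm (Y (t_ i))) h) != sz -> h = None.
      move=> h Hh; case: (locX w X Y e _ HXS HYB h Hh) => // Eh.
      by move: Hh; rewrite Eh SomeP HXe0.
    have := orth_one Ho Hloc; rewrite NoneP HXN.
    by move: HYt; case: (Y (t_ i)) => [[]|].
  rewrite /USO Hpick.
  by move: HXe; rewrite /e; case: (X _) => [[]|].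
Qed.
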